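(* Let $T$ be a tree with exactly three pendant vertices $u_1,u_2,u_3$, and let $m$ be its major vertex, with $d(u_1,m)\equiv d(u_2,m)\equiv 1\pmod 3$. Then $1$ is an eigenvalue of $L(T)$.
   Context: $L(T)=D(T)-A(T)$ is the Laplacian matrix of the tree $T$. A pendant vertex has degree $1$; a major vertex has degree at least $3$ (a tree with exactly three pendant vertices has exactly one major vertex). $d$ denotes distance. *)

(* Defs.v *)
From HB Require Import structures.
From mathcomp Require Import all_boot all_order all_algebra.
Set Implicit Arguments. Unset Strict Implicit. Unset Printing Implicit Defensive.
Import Order.TTheory GRing.Theory Num.Theory.

Definition simple_graph n (e : rel 'I_n) := symmetric e /\ irreflexive e.

Definition is_tree n (e : rel 'I_n) :=
  [/\ simple_graph e,
      0 < n,
      forall x y, connect e x y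
    & ~ exists c : seq 'I_n, [/\ uniq c, 3 <= size c & cycle e c]].

Definition deg n (e : rel 'I_n) (v : 'I_n) : nat := #|[set w | e v w]|.

Definition dist_is n (e : rel 'I_n) (x y : 'I_n) (k : nat) :=
  (exists p : seq 'I_n, [/\ path e x p, last x p = y & size p = k]) /\
  (forall p : seq 'I_n, path e x p -> last x p = y -> k <= size p).

Local Open Scope ring_scope.
Definition laplacian (R : nzRingType) n (e : rel 'I_n) : 'M[R]_n :=
  diag_mx (\row_i ((deg e i)%:R : R)) - \matrix_(i, j) ((e i j)%:R : R).

(* Main.v *)
Require Import Defs.
From mathcomp Require Import all_boot all_order all_algebra.
From mathcomp Require Import zify ring lra.
Import GRing.Theory Num.Theory.
Set Implicit Arguments. Unset Strict Implicit. Unset Printing Implicit Defensive.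

Section H.
Variable R : realFieldType.
Local Open Scope ring_scope.
Definition h (j : nat) : R :=
  let r := (j %% 6)%N in
  if (r == 1)%N || (r == 2)%N then 1 else if (r == 4)%N || (r == 5)%N then -1 else 0.

Lemma h_rec j : (0 < j)%N -> h j = h j.-1 + h j.+1.
Proof.
case: j => // j _ /=.
have E1 : (j.+1 %% 6 = (j %% 6 + 1) %% 6)%N by rewrite modnDml addn1.
have E2 : (j.+2 %% 6 = (j %% 6 + 2) %% 6)%N by rewrite modnDml addn2.
rewrite /h E1 E2.
have : (j %% 6 < 6)%N by rewrite ltn_mod.
case: (j %% 6)%N => [|[|[|[|[|[|r]]]]]] //= _; rewrite ?addr0 ?add0r ?addrN //. by rewrite addNr.
Qed.

Lemma h_leaf d : (0 < d)%N -> (d %% 3 = 1)%N -> h d.-1 = 0.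
Proof.
case: d => // d _ /=; rewrite -addn1 -modnDml => hd.
have h3 : (d %% 6 %% 3 = d %% 3)%N by rewrite (modn_dvdm _ (isT : (3 %| 6)%N)).
rewrite /h; move: h3 hd; have : (d %% 6 < 6)%N by rewrite ltn_mod.
case: (d %% 6)%N => [|[|[|[|[|[|r]]]]]] //= _ <- //.
Qed.

Lemma h0 : h 0 = 0. Proof. by []. Qed.
Lemma h1 : h 1 = 1. Proof. by []. Qed.
End H.

Section Graph.
Variables (n : nat) (e : rel 'I_n) (m : 'I_n).
Hypothesis esy : symmetric e.
Hypothesis eirr : irreflexive e.
Hypothesis econn : forall x y, connect e x y.
Hypothesis enocyc : ~ exists c : seq 'I_n, [/\ uniq c, 3 <= size c & cycle e c].

Lemma separation v a b r : e v a -> e v b -> a != b -> path e a r -> last a r = b ->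
  v \notin a :: r -> False.
Proof.
move=> eva evb ab pr lr vr.
case: (shortenP pr) lr => p' pp' up' sub lp'.
apply: enocyc; exists [:: v, a & p']; split.
- rewrite cons_uniq up' andbT; apply: contra vr; rewrite !inE => /orP[->//|/sub ->].
  by rewrite orbT.
- case: p' {pp' up' sub} lp' => [/= lab|//]; by rewrite lab eqxx in ab.
- by rewrite /= eva rcons_path pp' /= lp' esy evb.
Qed.

Lemma rev_walk x p : path e x p -> 
  path e (last x p) (rev (belast x p)) /\ last (last x p) (rev (belast x p)) = x.
Proof.
move=> px; split.
  by rewrite rev_path; apply: sub_path px => a b; rewrite esy.
by case: p {px} => //= y p; rewrite rev_cons last_rcons.
Qed.

Definition reach k v := [exists t : k.-tuple 'I_n, path e v t && (last v t == m)].

Lemma reachP k v : reflect (exists p, [/\ path e v p, last v p = m & size p = k]) (reach k v).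
Proof.
apply: (iffP existsP) => [[t /andP[pt /eqP lt]]|[p [pp lp sp]]].
  by exists t; rewrite size_tuple.
have sp' : size p == k by rewrite sp.
by exists (Tuple sp'); rewrite /= pp lp eqxx.
Qed.

Lemma exD v : exists k, reach k v.
Proof.
have /connectP[p pp lp] := econn v m.
by exists (size p); apply/reachP; exists p.
Qed.

Definition D v := ex_minn (exD v).

Lemma D_reach v : reach (D v) v.
Proof. by rewrite /D; case: ex_minnP. Qed.

Lemma D_min v k : reach k v -> D v <= k.
Proof. by rewrite /D; case: ex_minnP => d _ H /H. Qed.

Lemma Dm : D m = 0.
Proof. by apply/eqP; rewrite -leqn0; apply: D_min; apply/reachP; exists [::]. Qed.

Lemma D0 v : D v = 0 -> v = m.
Proof.
move=> h; have := D_reach v; rewrite h => /reachP[p [_ lp sp]].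
by case: p lp sp.
Qed.

Lemma D_edge v w : e v w -> D v <= (D w).+1.
Proof.
move=> evw; apply: D_min; have /reachP[p [pp lp sp]] := D_reach w.
by apply/reachP; exists (w :: p); rewrite /= evw pp lp sp.
Qed.

Lemma D_par v : v != m -> exists w, e v w /\ D v = (D w).+1.
Proof.
move=> vm; have /reachP[[|w p] [pp lp sp]] := D_reach v.
  by rewrite -lp eqxx in vm.
move: pp => /= /andP[evw pw]; exists w; split=> //.
have : D w <= size p by apply: D_min; apply/reachP; exists p.
have := D_edge evw; rewrite -sp /=; lia.
Qed.

Lemma geo_avoid a v q : path e a q -> last a q = m -> size q = D a -> D a <= D v ->
  e v a -> v \notin a :: q.
Proof.
move=> pq lq sq hle eva; rewrite inE negb_or; apply/andP; split.
  by apply: contraTneq eva => ->; rewrite eirr.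
apply/negP => /splitPr hq; case: hq pq lq sq => q1 q2.
rewrite cat_path last_cat /= => /andP[_ /andP[_ pq2]] lq2 sq.
have := D_min (k := size q2) (v := v); rewrite size_cat /= in sq.
move=> H; have := H (introT (reachP _ _) (ex_intro _ q2 (And3 pq2 lq2 erefl))).
move=> H1; move: H1 sq hle; set s := size q2; set t := size q1; lia.
Qed.

Lemma D_uniq v a b : e v a -> e v b -> D a <= D v -> D b <= D v -> a = b.
Proof.
move=> eva evb la lb; apply/eqP/negPn/negP => ab.
have /reachP[qa [pqa lqa sqa]] := D_reach a.
have /reachP[qb [pqb lqb sqb]] := D_reach b.
have va := geo_avoid pqa lqa sqa la eva.
have vb := geo_avoid pqb lqb sqb lb evb.
have [r1 r2] := rev_walk pqb; rewrite lqb in r1 r2.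
apply: (separation eva evb ab (r := qa ++ rev (belast b qb))).
- by rewrite cat_path pqa lqa.
- by rewrite last_cat lqa.
apply: contra va; rewrite !inE mem_cat mem_rev => /orP[->//|/orP[->|]].
  by rewrite orbT.
move/mem_belast => H; by rewrite (negbTE vb) in H.
Qed.

Lemma D_adj v w : e v w -> D w = (D v).+1 \/ D v = (D w).+1.
Proof.
move=> evw; have h1 := D_edge evw; have h2 := D_edge (w := v) (v := w).
rewrite esy evw in h2; have {}h2 := h2 erefl.
have [hlt|hgt|eq] := ltngtP (D v) (D w); [left; lia| right; lia|].
exfalso; have [vm|vm] := eqVneq v m.
  move: eq; rewrite vm Dm => /esym /D0 wm; by rewrite vm wm eirr in evw.
have [p [evp Dp]] := D_par vm.
have pw : p = w by apply: (D_uniq evp evw); lia.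
move: Dp; rewrite pw; lia.
Qed.

Definition pa v := if [pick w | e v w && (D v == (D w).+1)] is Some w then w else v.

Lemma pa_m : pa m = m.
Proof. rewrite /pa; case: pickP => // w /andP[_]; by rewrite Dm. Qed.

Lemma pa_spec v : v != m -> e v (pa v) /\ D v = (D (pa v)).+1.
Proof.
move=> vm; rewrite /pa; case: pickP => [w /andP[? /eqP ?]//|H].
have [w [evw Dw]] := D_par vm; have := H w; by rewrite evw Dw eqxx.
Qed.

Lemma pa_eq v w : e v w -> D v = (D w).+1 -> w = pa v.
Proof.
move=> evw Dw; have vm : v != m by apply/eqP => vm; move: Dw; rewrite vm Dm.
have [e1 D1] := pa_spec vm; apply: (D_uniq evw e1); lia.
Qed.

Lemma edge_char v w : e v w = ((w != m) && (pa w == v)) || ((v != m) && (w == pa v)).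
Proof.
apply/idP/idP.
  move=> evw; case: (D_adj evw) => h.
  - have wm : w != m by apply/eqP => wm; move: h; rewrite wm Dm.
    by rewrite wm -(pa_eq _ h) ?eqxx // esy.
  - have vm : v != m by apply/eqP => vm; move: h; rewrite vm Dm.
    by rewrite vm (pa_eq evw h) eqxx orbT.
case/orP => /andP[hm /eqP hh].
  by rewrite -hh esy; case: (pa_spec hm).
by rewrite hh; case: (pa_spec hm).
Qed.


Definition ch v := [set w | (w != m) && (pa w == v)].

Lemma deg_ch v : deg e v = #|ch v| + (v != m).
Proof.
rewrite /deg.
have -> : [set w | e v w] = ch v :|: [set w | (v != m) && (w == pa v)].
  by apply/setP => w; rewrite !inE edge_char.
rewrite cardsU.
have -> : ch v :&: [set w | (v != m) && (w == pa v)] = set0.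
  apply/setP => w; rewrite !inE; apply/negbTE/negP.
  move=> /andP[/andP[wm /eqP pw] /andP[vm /eqP wp]].
  have [_ D1] := pa_spec wm; have [_ D2] := pa_spec vm.
  rewrite pw in D1; rewrite -wp in D2; lia.
rewrite cards0 subn0; congr (_ + _).
case: (eqVneq v m) => [->|vm] /=.
  apply/eqP; rewrite cards_eq0; apply/eqP/setP => w; rewrite !inE; by [].
have -> : [set w | w == pa v] = [set pa v] by apply/setP => w; rewrite !inE.
by rewrite cards1.
Qed.

Lemma sum_ch : \sum_v #|ch v| = n.-1.
Proof.
have -> : \sum_v #|ch v| = \sum_v \sum_(w | (w != m) && (pa w == v)) 1.
  apply: eq_bigr => v _; rewrite -sum1_card; apply: eq_bigl => w; by rewrite inE.
rewrite -(partition_big (P := fun w => w != m) pa predT) //.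
by rewrite sum1_card cardC1 card_ord.
Qed.

Lemma sum_pointwise (f g : 'I_n -> nat) : (forall i, g i <= f i) ->
  \sum_i f i <= \sum_i g i -> forall i, f i = g i.
Proof.
move=> H Hs i; apply/eqP; rewrite eqn_leq H andbT; apply: contraLR Hs; rewrite -!ltnNge => hlt.
rewrite (bigD1 i) //= [X in _ < X](bigD1 i) //=.
have : \sum_(j | j != i) g j <= \sum_(j | j != i) f j by apply: leq_sum => j _.
move=> hs; apply: (leq_trans (n := f i + \sum_(j | j != i) g j)); [by rewrite ltn_add2r | by rewrite leq_add2l].
Qed.

Variable U : {set 'I_n}.
Hypothesis U3 : #|U| = 3.
Hypothesis mU : m \notin U.
Hypothesis Udeg : forall v, (v \in U) = (deg e v == 1).
Hypothesis mdeg : 3 <= deg e m.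
Hypothesis npos : 0 < n.

Definition lb v := if v \in U then 0 else if v == m then 3 else 1.

Lemma ch_lb v : #|ch v| = lb v.
Proof.
move: v; apply: sum_pointwise.
  move=> v; rewrite /lb; case: ifP => // vU; case: eqP => [->|/eqP vm].
    by move: mdeg; rewrite deg_ch eqxx addn0.
  move/negbT: vU; rewrite Udeg deg_ch vm; lia.
rewrite sum_ch.
have H1 : forall v, lb v + (v \in U) = 1 + (v == m).*2.
  move=> v; rewrite /lb; case: (eqVneq v m) => [->|vm]; first by rewrite (negbTE mU).
  by case: (v \in U).
have H2 : \sum_v (lb v + (v \in U)) = n + 2.
  under eq_bigr => v _ do rewrite H1.
  rewrite big_split /= sum_nat_const card_ord muln1.
  rewrite (bigD1 m) //= eqxx big1 // => v /negbTE ->; by [].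
have H3 : \sum_v ((v \in U) : nat) = 3.
  rewrite -U3 -sum1_card [RHS]big_mkcond /=; apply: eq_bigr => v _; by case: (v \in U).
move: H2; rewrite big_split /= H3; set s := \sum_(i < n) lb i; move=> h; lia.
Qed.

Lemma chU v : v \in U -> ch v = set0.
Proof. by move=> vU; apply/eqP; rewrite -cards_eq0 ch_lb /lb vU. Qed.

Lemma ch1 v : v \notin U -> v != m -> #|ch v| = 1.
Proof. by move=> vU vm; rewrite ch_lb /lb (negbTE vU) (negbTE vm). Qed.

Lemma D_iter k x : D (iter k pa x) = D x - k.
Proof.
elim: k => [|k IH]; first by rewrite subn0.
rewrite iterS; case: (eqVneq (iter k pa x) m) => [hm|hm].
  by rewrite hm pa_m Dm; move: IH; rewrite hm Dm; lia.
have [_ Dp] := pa_spec hm; move: IH; rewrite Dp; lia.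
Qed.

Definition L u v := iter (D u - D v) pa u == v.

Lemma L_closed u j i : u \in U -> L u j -> j != m -> e j i -> L u i.
Proof.
rewrite /L => uU; set k := D u - D j => /eqP hj jm.
have Dj : D j = D u - k by rewrite -hj D_iter.
have Djp : 0 < D j by rewrite lt0n; apply/eqP => /D0 /eqP; rewrite (negbTE jm).
rewrite edge_char => /orP[/andP[im /eqP pi]|/andP[_ /eqP ->]]; last first.
  have [_ Dp] := pa_spec jm.
  have -> : D u - D (pa j) = k.+1 by move: Dp Dj Djp; rewrite /k; lia.
  by rewrite iterS hj.
move: hj Dj; case: k => [|k'] /= hj Dj.
  by have := chU uU; rewrite hj => /setP/(_ i); rewrite !inE im pi eqxx.
have cm : iter k' pa u != m.
  by apply/eqP => hh; move: hj; rewrite hh pa_m => hmj; rewrite hmj eqxx in jm.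
have jU : j \notin U.
  apply/negP => jU; have := chU jU => /setP/(_ (iter k' pa u)).
  by rewrite !inE cm hj eqxx.
have /eqP/cards1P [y hy] := ch1 jU jm.
have : i \in ch j by rewrite inE im pi eqxx.
have : iter k' pa u \in ch j by rewrite inE cm hj eqxx.
rewrite hy !inE => /eqP c1 /eqP i1.
rewrite i1 -c1 D_iter.
have -> : D u - (D u - k') = k' by move: Dj Djp; lia.
by [].
Qed.

Lemma L_leaf u z : u \in U -> z \in U -> L u z -> z = u.
Proof.
rewrite /L => uU zU; case: (D u - D z) => [|k] /eqP; first by move=> <-.
rewrite iterS => hz.
have cm : iter k pa u != m.
  by apply/eqP => hh; move: hz; rewrite hh pa_m => hm; move: mU; rewrite hm zU.
have := chU zU => /setP/(_ (iter k pa u)); by rewrite !inE cm hz eqxx.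
Qed.

Lemma L_disj u1 u2 : u1 \in U -> u2 \in U -> u1 != u2 ->
  forall k1 k2, iter k1 pa u1 = iter k2 pa u2 -> iter k1 pa u1 = m.
Proof.
move=> U1 U2 u12; elim=> [|k1 IH] k2 /=.
  case: k2 => [/= h|k2]; first by rewrite h eqxx in u12.
  rewrite iterS => h; apply/eqP/negPn/negP => hm.
  have cm : iter k2 pa u2 != m by apply: contraNneq hm => hh; rewrite h hh pa_m.
  have := chU U1 => /setP/(_ (iter k2 pa u2)); by rewrite !inE cm h eqxx.
case: k2 => [|k2] /=.
  move=> h; apply/eqP/negPn/negP => hm.
  have cm : iter k1 pa u1 != m by apply: contraNneq hm => hh; rewrite hh pa_m.
  have := chU U2 => /setP/(_ (iter k1 pa u1)); by rewrite !inE cm -h eqxx.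
move=> h; apply/eqP/negPn/negP => hm.
have c1 : iter k1 pa u1 != m by apply: contraNneq hm => hh; rewrite hh pa_m.
have c2 : iter k2 pa u2 != m by apply: contraNneq hm => hh; rewrite h hh pa_m.
set v := pa (iter k1 pa u1) in hm h.
have vU : v \notin U.
  apply/negP => vU; have := chU vU => /setP/(_ (iter k1 pa u1)).
  by rewrite !inE c1 eqxx.
have /eqP/cards1P [y hy] := ch1 vU hm.
have : iter k1 pa u1 \in ch v by rewrite inE c1 eqxx.
have : iter k2 pa u2 \in ch v by rewrite inE c2 h eqxx.
rewrite hy !inE => /eqP a2 /eqP a1.
have := IH k2; rewrite a1 a2 => /(_ erefl) hh.
by rewrite a2 hh eqxx in c2.
Qed.

Section Eig.
Local Open Scope ring_scope.
Variable R : realFieldType.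

Lemma nbr_sum (x : 'I_n -> R) j : j != m ->
  \sum_(i | e j i) x i = x (pa j) + \sum_(i in ch j) x i.
Proof.
move=> jm; have [ep Dp] := pa_spec jm.
rewrite (bigD1 (pa j)) //=; congr (_ + _); apply: eq_bigl => i.
rewrite inE edge_char jm /=; apply/idP/idP.
  by case/andP => /orP[//|/eqP -> ]; rewrite eqxx.
move=> /andP[im /eqP pi]; rewrite im pi eqxx /=.
apply/eqP => ip; have [_ Di] := pa_spec im; move: Di Dp; rewrite pi ip; lia.
Qed.

Lemma nbr_sum_m (x : 'I_n -> R) : \sum_(i | e m i) x i = \sum_(i in ch m) x i.
Proof. by apply: eq_bigl => i; rewrite inE edge_char eqxx /= orbF. Qed.

Lemma ch_D i j : i \in ch j -> D i = (D j).+1.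
Proof. by rewrite inE => /andP[im /eqP <-]; case: (pa_spec im). Qed.

Lemma ch_e i j : i \in ch j -> e j i.
Proof. by rewrite inE edge_char => ->. Qed.

Lemma leg_eq (x : 'I_n -> R) (s : R) u j : u \in U -> (D u %% 3 = 1)%N ->
  (forall i, L u i -> x i = s * h R (D i)) -> L u j -> j != m ->
  x j * (deg e j)%:R - \sum_(i | e j i) x i = x j.
Proof.
move=> uU Du hx Lj jm.
rewrite nbr_sum // deg_ch jm.
have [ep Dp] := pa_spec jm.
have -> : \sum_(i in ch j) x i = (s * h R (D j).+1) *+ #|ch j|.
  rewrite -sumr_const; apply: eq_bigr => i ij.
  by rewrite hx ?(ch_D ij) // (L_closed uU Lj jm (ch_e ij)).
have Lp : L u (pa j) by apply: (L_closed uU Lj jm ep).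
rewrite (hx _ Lp) (hx _ Lj).
have Dpj : D (pa j) = (D j).-1 by rewrite Dp.
rewrite Dpj.
have Dj0 : (0 < D j)%N by rewrite lt0n; apply/eqP => /D0 jm'; rewrite jm' eqxx in jm.
case: (boolP (j \in U)) => jU.
  have ju := L_leaf uU jU Lj.
  rewrite chU // cards0 mulr0n addr0 ju h_leaf ?Du //; last by rewrite -ju.
  by rewrite mulr0 subr0 mulr1.
rewrite ch1 // mulr1n.
rewrite [h R (D j)](h_rec R Dj0).
rewrite -[(1 + true)%N]/2%N; ring.
Qed.

Lemma sum_eq1 (c : 'I_n) (A : {set 'I_n}) : c \in A ->
  \sum_(i in A) ((i == c)%:R : R) = 1.
Proof.
move=> cA; rewrite (bigD1 c) //= eqxx big1 ?addr0 // => i /andP[_ /negbTE ->]; by [].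
Qed.

Lemma eig u1 u2 : u1 \in U -> u2 \in U -> u1 != u2 ->
  (D u1 %% 3 = 1)%N -> (D u2 %% 3 = 1)%N -> eigenvalue (laplacian R e) 1.
Proof.
move=> U1 U2 u12 D1 D2.
have um u : u \in U -> u != m by move=> uU; apply: contraTneq uU => ->.
have Dpos u : u \in U -> (0 < D u)%N.
  by move=> uU; rewrite lt0n; apply/eqP => /D0 /eqP; rewrite (negbTE (um u uU)).
pose x i := if L u1 i then h R (D i) else if L u2 i then - h R (D i) else 0.
have Lm u : L u m by rewrite /L Dm subn0; apply/eqP/D0; rewrite D_iter subnn.
have LL i : L u1 i -> L u2 i -> i = m.
  rewrite /L => /eqP h1 /eqP h2.
  by rewrite -h1; apply: (L_disj U1 U2 u12 (etrans h1 (esym h2))).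
have hx1 i : L u1 i -> x i = 1 * h R (D i) by rewrite /x => ->; rewrite mul1r.
have hx2 i : L u2 i -> x i = -1 * h R (D i).
  rewrite /x => L2i; rewrite L2i; case: ifP => [L1i|_]; last by rewrite mulN1r.
  by rewrite (LL _ L1i L2i) Dm h0 mulr0.
have hx0 i : ~~ L u1 i -> ~~ L u2 i -> x i = 0 by rewrite /x => /negbTE -> /negbTE ->.
have Lch u : u \in U -> iter (D u).-1 pa u \in ch m /\
    forall i, i \in ch m -> L u i = (iter (D u).-1 pa u == i).
  move=> uU; have Du := Dpos u uU; split.
    rewrite inE; apply/andP; split.
      apply/eqP => hm; have := D_iter (D u).-1 u; rewrite hm Dm; lia.
    rewrite -iterS prednK //; apply/eqP/D0; by rewrite D_iter subnn.
  move=> i im; rewrite /L (ch_D im) Dm subn1 //.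
set c1 := iter (D u1).-1 pa u1; set c2 := iter (D u2).-1 pa u2.
have [c1m L1c] := Lch u1 U1; have [c2m L2c] := Lch u2 U2.
have c12 : c1 != c2.
  apply/eqP => hc; have := L_disj U1 U2 u12 hc => hh.
  by move: c1m; rewrite hh inE eqxx.
apply/eigenvalueP; exists (\row_i x i).
  apply/rowP => j; rewrite /laplacian mulmxBr mul_mx_diag !mxE.
  under eq_bigr do rewrite !mxE.
  have -> : \sum_i x i * (e i j)%:R = \sum_(i | e j i) x i.
    rewrite [RHS]big_mkcond; apply: eq_bigr => i _; rewrite esy.
    by case: (e j i); rewrite ?mulr1 ?mulr0.
  rewrite mul1r.
  case: (eqVneq j m) => [->|jm].
    rewrite hx1 ?Lm // Dm h0 mulr0 !mul0r sub0r nbr_sum_m.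
    have -> : \sum_(i in ch m) x i = \sum_(i in ch m) ((i == c1)%:R - (i == c2)%:R).
      apply: eq_bigr => i im; rewrite /x (L1c i im) (L2c i im) (ch_D im) Dm h1.
      case: (eqVneq c1 i) => [<-|n1] /=; first by rewrite ?eqxx (negbTE c12) subr0.
      rewrite ?sub0r.
      by rewrite -/c2; case: (eqVneq c2 i) => [e2|n2] /=; rewrite ?oppr0.
    by rewrite sumrB !sum_eq1 // subrr oppr0.
  case: (boolP (L u1 j)) => L1j; first by apply: (leg_eq (s := 1) U1 D1 hx1 L1j jm).
  case: (boolP (L u2 j)) => L2j; first by apply: (leg_eq (s := -1) U2 D2 hx2 L2j jm).
  rewrite hx0 // mul0r big1 ?subr0 // => i eji.
  have eij : e i j by rewrite esy.
  case: (boolP (L u1 i)) => L1i.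
    case: (eqVneq i m) => [->|im]; first by rewrite hx1 // Dm h0 mulr0.
    by rewrite (L_closed U1 L1i im eij) in L1j.
  case: (boolP (L u2 i)) => L2i; last by rewrite hx0.
  case: (eqVneq i m) => [->|im]; first by rewrite hx2 ?Lm // Dm h0 mulr0.
  by rewrite (L_closed U2 L2i im eij) in L2j.
apply/eqP => /rowP/(_ c1); rewrite !mxE /x (L1c c1 c1m) eqxx (ch_D c1m) Dm h1.
by move/eqP; rewrite oner_eq0.
Qed.

End Eig.

End Graph.

Unset Implicit Arguments.
Local Open Scope ring_scope.
Theorem mainTheorem4 (R : realFieldType) (n : nat) (e : rel 'I_n)
    (u1 u2 u3 m : 'I_n) (d1 d2 : nat) :
  is_tree e ->
  [&& u1 != u2, u1 != u3 & u2 != u3] ->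
  [set v | deg e v == 1%N] = [set u1; u2; u3] ->
  (3 <= deg e m)%N ->
  dist_is e u1 m d1 -> dist_is e u2 m d2 ->
  d1 = 1 %[mod 3] -> d2 = 1 %[mod 3] ->
  eigenvalue (laplacian R e) 1.
Proof.
move=> [[esy eirr] npos econn enocyc] /and3P[u12 u13 u23] HU mdeg dist1 dist2 hd1 hd2.
have Udeg : forall v, (v \in [set u1; u2; u3]) = (deg e v == 1%N).
  by move=> v; rewrite -HU inE.
have U3 : #|[set u1; u2; u3]| = 3%N.
  have -> : [set u1; u2; u3] = u1 |: [set u2; u3].
    by apply/setP => v; rewrite !inE orbA.
  rewrite cardsU1 cards2 u23 !inE negb_or u12 u13; by [].
have mU : m \notin [set u1; u2; u3] by rewrite Udeg; apply/negP => /eqP h; rewrite h in mdeg.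
have Dd u d : dist_is e u m d -> D m econn u = d.
  move=> [[p [pp lp sp]] minp]; apply/eqP; rewrite eqn_leq; apply/andP; split.
    by rewrite -sp; apply: D_min; apply/reachP; exists p.
  have /reachP[q [pq lq sq]] := D_reach m econn u.
  by rewrite -sq; apply: minp.
apply: (eig esy eirr enocyc U3 mU Udeg mdeg npos R (u1 := u1) (u2 := u2)) => //.
- by rewrite !inE eqxx.
- by rewrite !inE eqxx orbT.
- by rewrite (Dd _ _ dist1) hd1.
- by rewrite (Dd _ _ dist2) hd2.
Qed.
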